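(* Let $\Omega$ be a domain in $\mathbb{C}^n$ satisfying property BR, and suppose that the absolute Bergman projection $P^+_{\Omega}:L^{p_0}(\Omega)\to L^{p_0}(\Omega)$ is bounded for some $1<p_0<\infty$. Then the Berezin transform $B_{\Omega}$ extends to a bounded operator $B_{\Omega}:L^p(\Omega)\to L^p(\Omega)$ for all $p_0\leq p\leq \infty$, and \[\|B_{\Omega}\|_{L^{p_0}} \leq \sup\left\{\frac{|K_{\Omega}(w,z)|}{K_{\Omega}(z,z)}:z,w\in \Omega \right\} \|P^+_{\Omega}\|_{L^{p_0}}.\]
   Context: For a domain $\Omega\subset\mathbb{C}^n$, $A^2(\Omega)$ is the Bergman space of square-integrable holomorphic functions, and $K_{\Omega}:\Omega\times\Omega\to\mathbb{C}$ is its Bergman kernel (the reproducing kernel of the orthogonal projection $P_\Omega:L^2(\Omega)\to A^2(\Omega)$). $\Omega$ satisfies property BR if $K_{\Omega}(z,z)\neq 0$ for all $z\in\Omega$ and $\sup\{|K_{\Omega}(w,z)|/K_{\Omega}(z,z): z,w\in\Omega\}<\infty$. When $K_\Omega(z,z)\neq0$ for all $z$, the normalized kernel is $k_z^{\Omega}(w)=K_{\Omega}(w,z)/\sqrt{K_{\Omega}(z,z)}$, and the Berezin transform of $\phi\in L^\infty(\Omega)$ is $B_{\Omega}\phi(z)=\langle P_\Omega(\phi k^\Omega_z),k^\Omega_z\rangle=\int_\Omega \phi(w)\,\frac{|K_{\Omega}(w,z)|^2}{K_{\Omega}(z,z)}\,dV(w)$. The absolute Bergman projection is $P^+_{\Omega}f(z)=\int_{\Omega}|K_{\Omega}(z,w)|f(w)\,dV(w)$.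 $\|\cdot\|_{L^p}$ denotes the $L^p(\Omega)$ norm (with respect to Lebesgue measure $dV$) and the corresponding operator norm. *)

(* Defs.v *)
(* Complex numbers: R[i] (mathcomp-real-closed),
   C^n := 'rV[R[i]]_n with its canonical normed-module structure over R[i];
   Lebesgue measure on C^n = R^{2n} realised through iterated (Tonelli)
   integrals of Lebesgue measure on R. *)
From HB Require Import structures.
From mathcomp Require Import all_boot all_order all_algebra.
From mathcomp Require Import all_classical all_reals all_analysis.
From mathcomp Require Import complex.
Import Order.TTheory GRing.Theory Num.Theory.

Set Implicit Arguments.
Unset Strict Implicit.
Unset Printing Implicit Defensive.

Local Open Scope classical_set_scope.
Local Open Scope ring_scope.

(** Iterated Lebesgue integral on R^m of a nonnegative function
    (= integral w.r.t. m-dimensional Lebesgue measure for Borel functions,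
    by Tonelli). *)
Fixpoint iint (R : realType) (m : nat) : (m.-tuple R -> \bar R) -> \bar R :=
  match m return (m.-tuple R -> \bar R) -> \bar R with
  | 0 => fun f => f [tuple]
  | m'.+1 => fun f =>
      (\int[@lebesgue_measure R]_x iint (fun t => f (cons_tuple x t)))%E
  end.

Definition toC (R : realType) (n : nat) (x y : n.-tuple R) : 'rV[R[i]]_n :=
  \row_j Complex (tnth x j) (tnth y j).

Definition vint (R : realType) (n : nat) (g : 'rV[R[i]]_n -> \bar R) : \bar R :=
  iint (fun x : n.-tuple R => iint (fun y : n.-tuple R => g (toC x y))).

Definition vint_on (R : realType) (n : nat) (Om : set 'rV[R[i]]_n)
  (g : 'rV[R[i]]_n -> \bar R) : \bar R :=
  vint (fun z => if `[< Om z >] then g z else 0%E).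

Definition restr (R : realType) (n : nat) (Om : set 'rV[R[i]]_n)
  (f : 'rV[R[i]]_n -> R[i]) : 'rV[R[i]]_n -> R[i] :=
  fun z => if `[< Om z >] then f z else 0.

Definition Cmeasurable (R : realType) (n : nat) (f : 'rV[R[i]]_n -> R[i]) :=
  measurable_fun setT (fun p : n.-tuple R * n.-tuple R => complex.Re (f (toC p.1 p.2)))
  /\ measurable_fun setT (fun p : n.-tuple R * n.-tuple R => complex.Im (f (toC p.1 p.2))).

Definition Cmeasurable_set (R : realType) (n : nat) (A : set 'rV[R[i]]_n) :=
  measurable [set p : n.-tuple R * n.-tuple R | A (toC p.1 p.2)].

Definition cabs (R : realType) (x : R[i]) : R := complex.Re `|x|.

Definition Lpnorm (R : realType) (n : nat) (Om : set 'rV[R[i]]_n) (p : \bar R)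
  (f : 'rV[R[i]]_n -> R[i]) : \bar R :=
  match p with
  | r%:E => (vint_on Om (fun z => ((cabs (f z)) `^ r)%:E) `^ r^-1)%E
  | +oo%E => ereal_inf [set M%:E | M in
        [set M : R | vint_on Om (fun z => ((((M < cabs (f z))%R : bool))%:R : R)%:E) = 0%E]]
  | -oo%E => +oo%E
  end.

Definition Lp (R : realType) (n : nat) (Om : set 'rV[R[i]]_n) (p : \bar R)
  (f : 'rV[R[i]]_n -> R[i]) : Prop :=
  Cmeasurable (restr Om f) /\ (Lpnorm Om p f < +oo)%E.

Definition cintegrable (R : realType) (n : nat) (Om : set 'rV[R[i]]_n)
  (h : 'rV[R[i]]_n -> R[i]) : Prop :=
  Cmeasurable (restr Om h) /\ (vint_on Om (fun z => (cabs (h z))%:E) < +oo)%E.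

Definition rint (R : realType) (n : nat) (Om : set 'rV[R[i]]_n)
  (u : 'rV[R[i]]_n -> R) : R :=
  fine (vint_on Om (fun z => (Num.max (u z) 0)%:E))
  - fine (vint_on Om (fun z => (Num.max (- u z) 0)%:E)).

Definition cint (R : realType) (n : nat) (Om : set 'rV[R[i]]_n)
  (h : 'rV[R[i]]_n -> R[i]) : R[i] :=
  Complex (rint Om (fun z => complex.Re (h z))) (rint Om (fun z => complex.Im (h z))).

Definition ae_on (R : realType) (n : nat) (Om : set 'rV[R[i]]_n)
  (P : 'rV[R[i]]_n -> Prop) : Prop :=
  exists N : set 'rV[R[i]]_n, Cmeasurable_set N /\
    vint (fun z => ((`[< N z >] : bool)%:R : R)%:E) = 0%E /\
    forall z, Om z -> ~ N z -> P z.

Definition domain (R : realType) (n : nat) (Om : set 'rV[R[i]]_n) : Prop :=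
  @open ('rV[R[i]]_n : normedModType R[i]) Om /\
  @connected ('rV[R[i]]_n : normedModType R[i]) Om /\ Om !=set0.

Definition holomorphic_on (R : realType) (n : nat) (Om : set 'rV[R[i]]_n)
  (f : 'rV[R[i]]_n -> R[i]) : Prop :=
  forall z, Om z -> differentiable (f : ('rV[R[i]]_n : normedModType R[i]) -> (R[i])^o)
    (z : ('rV[R[i]]_n : normedModType R[i])).

Definition A2 (R : realType) (n : nat) (Om : set 'rV[R[i]]_n)
  (f : 'rV[R[i]]_n -> R[i]) : Prop :=
  holomorphic_on Om f /\ Lp Om 2%:E f.

(** K is the Bergman kernel of Omega: K(.,z) in A^2 and
    f(z) = <f, K(.,z)> = int_Omega f(w) conj(K(w,z)) dV(w) for f in A^2.
    (This determines K uniquely on Omega x Omega.) *)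
Definition bergman_kernel (R : realType) (n : nat) (Om : set 'rV[R[i]]_n)
  (K : 'rV[R[i]]_n -> 'rV[R[i]]_n -> R[i]) : Prop :=
  (forall z, Om z -> A2 Om (fun w => K w z)) /\
  (forall f, A2 Om f -> forall z, Om z ->
     f z = cint Om (fun w => f w * conjc (K w z))).

Definition BR_sup (R : realType) (n : nat) (Om : set 'rV[R[i]]_n)
  (K : 'rV[R[i]]_n -> 'rV[R[i]]_n -> R[i]) : \bar R :=
  ereal_sup [set r | exists z w, Om z /\ Om w /\
                       r = (complex.Re (`|K w z| / K z z))%:E].

Definition property_BR (R : realType) (n : nat) (Om : set 'rV[R[i]]_n)
  (K : 'rV[R[i]]_n -> 'rV[R[i]]_n -> R[i]) : Prop :=
  (forall z, Om z -> K z z != 0) /\ (BR_sup Om K < +oo)%E.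

Definition Pplus (R : realType) (n : nat) (Om : set 'rV[R[i]]_n)
  (K : 'rV[R[i]]_n -> 'rV[R[i]]_n -> R[i]) (f : 'rV[R[i]]_n -> R[i]) :
  'rV[R[i]]_n -> R[i] :=
  fun z => cint Om (fun w => `|K z w| * f w).

Definition berezin (R : realType) (n : nat) (Om : set 'rV[R[i]]_n)
  (K : 'rV[R[i]]_n -> 'rV[R[i]]_n -> R[i]) (phi : 'rV[R[i]]_n -> R[i]) :
  'rV[R[i]]_n -> R[i] :=
  fun z => cint Om (fun w => phi w * (`|K w z| ^+ 2 / K z z)).

Definition Pplus_bound (R : realType) (n : nat) (Om : set 'rV[R[i]]_n)
  (K : 'rV[R[i]]_n -> 'rV[R[i]]_n -> R[i]) (p : R) (M : R) : Prop :=
  0 <= M /\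
  forall f, Lp Om p%:E f ->
    ae_on Om (fun z => cintegrable Om (fun w => `|K z w| * f w)) /\
    (Lpnorm Om p%:E (Pplus Om K f) <= M%:E * Lpnorm Om p%:E f)%E.

Definition Pplus_norm (R : realType) (n : nat) (Om : set 'rV[R[i]]_n)
  (K : 'rV[R[i]]_n -> 'rV[R[i]]_n -> R[i]) (p : R) : \bar R :=
  ereal_inf [set M%:E | M in [set M | Pplus_bound Om K p M]].

(** C bounds B on L^infty cap L^p in the L^p norm; for p < oo this is
    equivalent to B extending (uniquely, by density) to a bounded operator
    on L^p with norm <= C. *)
Definition berezin_bound (R : realType) (n : nat) (Om : set 'rV[R[i]]_n)
  (K : 'rV[R[i]]_n -> 'rV[R[i]]_n -> R[i]) (p : \bar R) (C : R) : Prop :=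
  0 <= C /\
  forall phi, Lp Om +oo%E phi -> Lp Om p phi ->
    (Lpnorm Om p (berezin Om K phi) <= C%:E * Lpnorm Om p phi)%E.

Definition berezin_norm (R : realType) (n : nat) (Om : set 'rV[R[i]]_n)
  (K : 'rV[R[i]]_n -> 'rV[R[i]]_n -> R[i]) (p : \bar R) : \bar R :=
  ereal_inf [set C%:E | C in [set C | berezin_bound Om K p C]].

(* Main.v *)
Require Import Defs.
From HB Require Import structures.
From mathcomp Require Import all_boot all_order all_algebra.
From mathcomp Require Import all_classical all_reals all_analysis.
From mathcomp Require Import complex.
From mathcomp Require Import measurable_realfun.
From mathcomp Require Import ring lra.
Import Order.TTheory GRing.Theory Num.Theory.
Local Open Scope classical_set_scope.
Local Open Scope ring_scope.
Set Implicit Arguments.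
Unset Strict Implicit.
Unset Printing Implicit Defensive.

Import HBNNSimple.
Section base.
Local Open Scope ereal_scope.
Context d (T : measurableType d) (R : realType).
Variable mu : {measure set T -> \bar R}.

Lemma L_mono (f g : T -> \bar R) : (forall x, 0 <= f x) -> (forall x, f x <= g x) ->
  \int[mu]_x f x <= \int[mu]_x g x.
Proof.
move=> f0 fg; have g0 x : 0 <= g x by apply: le_trans (fg x).
rewrite !ge0_integralTE//; apply: le_ereal_sup => _ [h /= hf <-].
by exists h => //= x; apply: le_trans (fg x).
Qed.

Lemma L_ae_mono (N : set T) (f g : T -> \bar R) : measurable N -> mu N = 0 ->
  (forall x, 0 <= f x) -> (forall x, 0 <= g x) ->
  (forall x, ~ N x -> f x <= g x) ->
  \int[mu]_x f x <= \int[mu]_x g x.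
Proof.
move=> mN N0 f0 g0 fg; rewrite [X in X <= _]ge0_integralTE//.
apply: ge_ereal_sup => _ [h /= hf <-].
rewrite -integralT_nnsfun.
rewrite (ae_eq_integral ((EFin \o h) \_ (~` N))) //.
- apply: L_mono => [x|x]; rewrite /patch; case: ifPn => //= xN.
  + by rewrite lee_fin.
  + by apply: le_trans (fg x _); [exact: hf| move: xN; rewrite inE].
- by apply/measurable_EFinP; exact: measurable_funP.
- apply/(measurable_restrictT _ _).1; first by apply: measurableC.
  by apply/measurable_EFinP; exact: measurable_funP.
- exists N; split => // x /= /not_implyP [_ hx]; apply: contrapT => Nx.
  by apply: hx; rewrite /patch/= ifT//; rewrite inE.
Qed.

Lemma L_scale_le (c : R) (f : T -> \bar R) : (0 < c)%R -> (forall x, 0 <= f x) ->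
  \int[mu]_x (c%:E * f x) <= c%:E * \int[mu]_x f x.
Proof.
move=> c0 f0; rewrite ge0_integralTE; last by move=> x; rewrite mule_ge0// lee_fin ltW.
apply: ge_ereal_sup => _ [h /= hf <-].
rewrite -integralT_nnsfun.
have -> : (fun x => (h x)%:E) = (fun x => c%:E * (c^-1 * h x)%:E).
  by apply: funext => x; rewrite -EFinM mulrA divff ?mul1r // gt_eqF.
rewrite ge0_integralZl_EFin //; last by rewrite ltW.
- rewrite lee_pmul2l ?lte_fin//; apply: L_mono => x.
    by rewrite lee_fin mulr_ge0// invr_ge0 ltW.
  rewrite -(@lee_pmul2l _ c%:E) ?lte_fin// -EFinM mulrA divff ?mul1r ?gt_eqF//.
- by move=> x _; rewrite lee_fin mulr_ge0// invr_ge0 ltW.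
- apply/measurable_EFinP; apply: measurable_funM => //; exact: measurable_funP.
Qed.

Lemma L_scale (c : R) (f : T -> \bar R) : (0 <= c)%R -> (forall x, 0 <= f x) ->
  \int[mu]_x (c%:E * f x) = c%:E * \int[mu]_x f x.
Proof.
move=> c0 f0; have [->|cpos] := eqVneq c 0%R.
  by rewrite mul0e; apply: integral0_eq => x _; rewrite mul0e.
have cp : (0 < c)%R by rewrite lt_def cpos.
apply/eqP; rewrite eq_le L_scale_le //=.
have cf0 x : 0 <= c%:E * f x by rewrite mule_ge0// lee_fin.
have ci : (0 < c^-1)%R by rewrite invr_gt0.
have := @L_scale_le c^-1 _ ci cf0.
have -> : (fun x => c^-1%:E * (c%:E * f x)) = f.
  by apply: funext => x; rewrite muleA -EFinM mulVf ?gt_eqF// mul1e.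
move=> H; rewrite -(@lee_pmul2l _ c^-1%:E) ?lte_fin ?invr_gt0//.
by rewrite muleA -EFinM mulVf ?gt_eqF// mul1e.
Qed.

End base.

Section iint_lemmas.
Local Open Scope ereal_scope.
Variable R : realType.
Local Notation leb := (@lebesgue_measure R).

Lemma meas_cons1 m (x : R) :
  measurable_fun setT (fun t : m.-tuple R => cons_tuple x t).
Proof. by have := (measurable_cons (measurable_cst x) (@measurable_id _ (m.-tuple R) setT)); apply. Qed.

Lemma meas_cons2 d (A : measurableType d) m :
  measurable_fun setT (fun q : (A * R) * m.-tuple R => (q.1.1, cons_tuple q.1.2 q.2)).
Proof.
apply: measurable_fun_pair.
  exact: measurableT_comp measurable_fst measurable_fst.
exact: (measurable_cons (measurableT_comp measurable_snd measurable_fst) measurable_snd).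
Qed.

Lemma meas_cons3 m :
  measurable_fun setT (fun q : R * m.-tuple R => cons_tuple q.1 q.2).
Proof. exact: (measurable_cons measurable_fst measurable_snd). Qed.

Lemma I_ge0 m (f : m.-tuple R -> \bar R) : (forall t, 0 <= f t) -> 0 <= iint f.
Proof.
elim: m f => [|m IH] f f0 /=; first exact: f0.
by apply: integral_ge0 => x _; apply: IH.
Qed.

Lemma I_mono m (f g : m.-tuple R -> \bar R) : (forall t, 0 <= f t) ->
  (forall t, f t <= g t) -> iint f <= iint g.
Proof.
elim: m f g => [|m IH] f g f0 fg /=; first exact: fg.
apply: L_mono => x; first by apply: I_ge0.
by apply: IH.
Qed.

Lemma I_scale m (c : R) (f : m.-tuple R -> \bar R) : (0 <= c)%R ->
  (forall t, 0 <= f t) -> iint (fun t => c%:E * f t) = c%:E * iint f.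
Proof.
elim: m f => [|m IH] f c0 f0 //=.
under eq_integral do rewrite IH //.
by apply: L_scale => // x; apply: I_ge0.
Qed.

Lemma I_meas m d (A : measurableType d) (f : A * m.-tuple R -> \bar R) :
  measurable_fun setT f -> (forall x, 0 <= f x) ->
  measurable_fun setT (fun a => iint (fun t => f (a, t))).
Proof.
elim: m d A f => [|m IH] d A f mf f0 /=.
  exact: measurable_fun_pair1.
pose g := fun q : (A * R) * m.-tuple R => f (q.1.1, cons_tuple q.1.2 q.2).
have mg : measurable_fun setT g.
  have := measurableT_comp mf (@meas_cons2 _ A m). by apply.
have := IH _ _ g mg (fun q => f0 _).
move=> mPhi.
have := @measurable_fun_fubini_tonelli_F _ _ A _ R leb _ mPhi (fun q => @I_ge0 _ _ (fun t => f0 _)).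
by [].
Qed.

Lemma I_add m (f g : m.-tuple R -> \bar R) :
  measurable_fun setT f -> measurable_fun setT g ->
  (forall t, 0 <= f t) -> (forall t, 0 <= g t) ->
  iint (fun t => f t + g t) = iint f + iint g.
Proof.
elim: m f g => [|m IH] f g mf mg f0 g0 //=.
transitivity (\int[leb]_x (iint (fun t => f (cons_tuple x t)) + iint (fun t => g (cons_tuple x t)))).
  apply: eq_integral => x _; apply: IH => //.
    by have := measurableT_comp mf (@meas_cons1 m x); apply.
  by have := measurableT_comp mg (@meas_cons1 m x); apply.
apply: ge0_integralD => //.
- by move=> x _; apply: I_ge0.
- exact: (@I_meas m _ _ (fun q : R * m.-tuple R => f (cons_tuple q.1 q.2)))
    (ltac:(by have := measurableT_comp mf (@meas_cons3 m); apply)) (fun q => f0 _).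
- by move=> x _; apply: I_ge0.
- exact: (@I_meas m _ _ (fun q : R * m.-tuple R => g (cons_tuple q.1 q.2)))
    (ltac:(by have := measurableT_comp mg (@meas_cons3 m); apply)) (fun q => g0 _).
Qed.

Lemma I_ae m (h f g : m.-tuple R -> \bar R) :
  measurable_fun setT h -> (forall t, 0 <= h t) -> iint h = 0 ->
  (forall t, 0 <= f t) -> (forall t, 0 <= g t) ->
  (forall t, h t = 0 -> f t <= g t) -> iint f <= iint g.
Proof.
elim: m h f g => [|m IH] h f g mh h0 hi0 f0 g0 fg /=; first exact: fg.
simpl in hi0.
pose phi := fun x => iint (fun t => h (cons_tuple x t)).
have mphi : measurable_fun setT phi.
  exact: (@I_meas m _ _ (fun q : R * m.-tuple R => h (cons_tuple q.1 q.2)))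
    (ltac:(by have := measurableT_comp mh (@meas_cons3 m); apply)) (fun q => h0 _).
have phi0 x : 0 <= phi x by apply: I_ge0.
have H0 : \int[leb]_x `|phi x| = 0.
  by rewrite -hi0; apply: eq_integral => x _; rewrite gee0_abs.
have [N [mN N0 sN]] := (ae_eq_integral_abs leb measurableT mphi).1 H0.
apply: (@L_ae_mono _ _ _ leb N _ _ mN N0).
- by move=> x; apply: I_ge0.
- by move=> x; apply: I_ge0.
move=> x Nx; apply: (IH (fun t => h (cons_tuple x t))) => //.
- by have := measurableT_comp mh (@meas_cons1 m x); apply.
- apply: contrapT => hx; apply: Nx; apply: sN => /= H; apply: hx.
  exact: H.
- by move=> t; apply: fg.
Qed.

End iint_lemmas.

Section vint_lemmas.
Local Open Scope ereal_scope.
Variable R : realType.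
Variable n : nat.
Local Notation V := ('rV[R[i]]_n).
Definition pm (g : V -> \bar R) := measurable_fun setT (fun p : n.-tuple R * n.-tuple R => g (toC p.1 p.2)).

Lemma pm_inner (g : V -> \bar R) x : pm g -> measurable_fun setT (fun y => g (toC x y)).
Proof. move=> mg; exact: (measurable_fun_pair2 x mg). Qed.

Lemma pm_outer (g : V -> \bar R) : pm g -> (forall z, 0 <= g z) ->
  measurable_fun setT (fun x => iint (fun y => g (toC x y))).
Proof.
move=> mg g0.
exact: (@I_meas R n _ _ (fun p : n.-tuple R * n.-tuple R => g (toC p.1 p.2)) mg (fun p => g0 _)).
Qed.

Lemma V_ge0 (g : V -> \bar R) : (forall z, 0 <= g z) -> 0 <= vint g.
Proof. by move=> g0; apply: I_ge0 => x; apply: I_ge0. Qed.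

Lemma V_mono (f g : V -> \bar R) : (forall z, 0 <= f z) -> (forall z, f z <= g z) ->
  vint f <= vint g.
Proof.
move=> f0 fg; apply: I_mono => x; first by apply: I_ge0.
by apply: I_mono.
Qed.

Lemma V_scale (c : R) (f : V -> \bar R) : (0 <= c)%R -> (forall z, 0 <= f z) ->
  vint (fun z => c%:E * f z) = c%:E * vint f.
Proof.
move=> c0 f0; rewrite /vint.
rewrite -I_scale //; last by move=> x; apply: I_ge0.
by congr iint; apply: funext => x; rewrite I_scale.
Qed.

Lemma V_add (f g : V -> \bar R) : pm f -> pm g ->
  (forall z, 0 <= f z) -> (forall z, 0 <= g z) ->
  vint (fun z => f z + g z) = vint f + vint g.
Proof.
move=> mf mg f0 g0; rewrite /vint.
rewrite -I_add; [|exact: pm_outer|exact: pm_outer|by move=> x; apply: I_ge0|by move=> x; apply: I_ge0].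
congr iint; apply: funext => x; rewrite I_add //; exact: pm_inner.
Qed.

Lemma V_ae (h f g : V -> \bar R) : pm h -> (forall z, 0 <= h z) -> vint h = 0 ->
  (forall z, 0 <= f z) -> (forall z, 0 <= g z) ->
  (forall z, h z = 0 -> f z <= g z) -> vint f <= vint g.
Proof.
move=> mh h0 hi0 f0 g0 fg; rewrite /vint.
have HH := (@I_ae R n _ (fun x => iint (fun y => f (toC x y))) (fun x => iint (fun y => g (toC x y))) (@pm_outer h mh h0)).
apply: HH.
- by move=> x; apply: I_ge0.
- exact: hi0.
- by move=> x; apply: I_ge0.
- by move=> x; apply: I_ge0.
move=> x hx; apply: (@I_ae R n _ _ _ (@pm_inner h x mh)) => //.
by move=> y; apply: fg.
Qed.

End vint_lemmas.

Section om.
Variable R : realType.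
Variable n : nat.
Local Notation V := ('rV[R[i]]_n).
Variable Om : set V.

Definition ru (u : V -> R) (z : V) : R := if `[< Om z >] then u z else 0.
Definition rm (u : V -> R) := measurable_fun setT (fun p : n.-tuple R * n.-tuple R => ru u (toC p.1 p.2)).
Definition vo (u : V -> R) := vint_on Om (fun z => (u z)%:E).

Lemma ruE u z : Om z -> ru u z = u z.
Proof. by move=> Oz; rewrite /ru asboolT. Qed.
Lemma ruNE u z : ~ Om z -> ru u z = 0.
Proof. by move=> Oz; rewrite /ru asboolF. Qed.

Lemma rm_ext u v : (forall z, Om z -> u z = v z) -> rm u -> rm v.
Proof.
move=> uv; rewrite /rm (_ : ru u = ru v) //; apply: funext => z.
by rewrite /ru; case: asboolP => // /uv.
Qed.

Lemma rm_comp (G : R -> R) u : G 0 = 0 -> measurable_fun setT G -> rm u ->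
  rm (fun z => G (u z)).
Proof.
move=> G0 mG mu; rewrite /rm (_ : (fun p => _) = G \o (fun p : n.-tuple R * n.-tuple R => ru u (toC p.1 p.2))).
  exact: measurableT_comp.
by apply: funext => p /=; rewrite /ru; case: asboolP.
Qed.

Lemma rm_add u v : rm u -> rm v -> rm (fun z => u z + v z).
Proof.
move=> mu mv; rewrite /rm (_ : (fun p => _) = (fun p : n.-tuple R * n.-tuple R => ru u (toC p.1 p.2)) \+ (fun p => ru v (toC p.1 p.2))).
  exact: measurable_funD.
by apply: funext => p /=; rewrite /ru; case: asboolP => //; rewrite addr0.
Qed.

Lemma rm_mul u v : rm u -> rm v -> rm (fun z => u z * v z).
Proof.
move=> mu mv; rewrite /rm (_ : (fun p => _) = (fun p : n.-tuple R * n.-tuple R => ru u (toC p.1 p.2)) \* (fun p => ru v (toC p.1 p.2))).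
  exact: measurable_funM.
by apply: funext => p /=; rewrite /ru; case: asboolP => //; rewrite mulr0.
Qed.

Lemma rm_scale (c : R) u : rm u -> rm (fun z => c * u z).
Proof.
move=> mu; apply: (@rm_comp (fun x => c * x)) => //; first by rewrite mulr0.
exact: measurable_funM.
Qed.

Lemma rm_max0 u : rm u -> rm (fun z => Num.max (u z) 0).
Proof.
move=> mu; apply: (@rm_comp (fun x => Num.max x 0)) => //; first by rewrite maxxx.
exact: measurable_maxr.
Qed.

Lemma rm_opp u : rm u -> rm (fun z => - u z).
Proof.
move=> mu; apply: (@rm_comp (fun x => - x)) => //; first by rewrite oppr0.
exact: measurable_funN.
Qed.

Lemma rm_abs u : rm u -> rm (fun z => `|u z|).
Proof.
move=> mu; apply: (@rm_comp (fun x => `|x|)) => //; first by rewrite normr0.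
Qed.

Lemma rm_powR (q : R) u : q != 0 -> rm u -> rm (fun z => u z `^ q).
Proof.
move=> q0 mu; apply: (@rm_comp (fun x => x `^ q)) => //; first by rewrite powR0.
Qed.

Lemma rm_sqrt u : rm u -> rm (fun z => Num.sqrt (u z)).
Proof.
move=> mu; apply: (@rm_comp (Num.sqrt)) => //; first by rewrite sqrtr0.
exact: continuous_measurable_fun (@sqrt_continuous R).
Qed.

Lemma rm0 : rm (fun _ => 0).
Proof.
rewrite /rm (_ : (fun p => _) = cst 0) //; apply: funext => p /=.
by rewrite /ru; case: asboolP.
Qed.

Lemma CM_Re (h : V -> R[i]) : Cmeasurable (restr Om h) -> rm (fun z => complex.Re (h z)).
Proof.
case=> mRe _; rewrite /rm (_ : (fun p => _) = (fun p : n.-tuple R * n.-tuple R => complex.Re (restr Om h (toC p.1 p.2)))) //.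
by apply: funext => p /=; rewrite /ru /restr; case: asboolP.
Qed.

Lemma CM_Im (h : V -> R[i]) : Cmeasurable (restr Om h) -> rm (fun z => complex.Im (h z)).
Proof.
case=> _ mIm; rewrite /rm (_ : (fun p => _) = (fun p : n.-tuple R * n.-tuple R => complex.Im (restr Om h (toC p.1 p.2)))) //.
by apply: funext => p /=; rewrite /ru /restr; case: asboolP.
Qed.

Lemma rm_CM (h : V -> R[i]) : rm (fun z => complex.Re (h z)) -> rm (fun z => complex.Im (h z)) ->
  Cmeasurable (restr Om h).
Proof.
move=> mRe mIm; split.
  move: mRe; rewrite /rm (_ : (fun p => _) = (fun p : n.-tuple R * n.-tuple R => complex.Re (restr Om h (toC p.1 p.2)))) //.
  by apply: funext => p /=; rewrite /ru /restr; case: asboolP.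
move: mIm; rewrite /rm (_ : (fun p => _) = (fun p : n.-tuple R * n.-tuple R => complex.Im (restr Om h (toC p.1 p.2)))) //.
by apply: funext => p /=; rewrite /ru /restr; case: asboolP.
Qed.

Lemma cabsE (x : R[i]) : cabs x = Num.sqrt (complex.Re x ^+ 2 + complex.Im x ^+ 2).
Proof. by rewrite /cabs normc_def. Qed.

Lemma rm_cabs (h : V -> R[i]) : Cmeasurable (restr Om h) -> rm (fun z => cabs (h z)).
Proof.
move=> mh; apply: (@rm_ext (fun z => Num.sqrt (complex.Re (h z) ^+ 2 + complex.Im (h z) ^+ 2))).
  by move=> z _; rewrite cabsE.
apply: rm_sqrt; apply: rm_add; apply: rm_mul.
- exact: CM_Re. - exact: CM_Re. - exact: CM_Im. - exact: CM_Im.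
Qed.

End om.

Section vo.
Variable R : realType.
Variable n : nat.
Local Notation V := ('rV[R[i]]_n).
Variable Om : set V.
Local Notation ru := (@ru R n Om).
Local Notation rm := (@rm R n Om).
Local Notation vo := (@vo R n Om).

Lemma voE u : vo u = vint (fun z => (ru u z)%:E).
Proof.
rewrite /vo /vint_on; congr vint; apply: funext => z.
by rewrite /ru; case: asboolP.
Qed.

Lemma vo_pm u : rm u -> pm (fun z => (ru u z)%:E).
Proof. by move=> mu; apply/measurable_EFinP. Qed.

Lemma vo_ge0 u : (forall z, Om z -> 0 <= u z) -> (0 <= vo u)%E.
Proof.
move=> u0; apply: V_ge0 => z; case: asboolP => // /u0.
by rewrite lee_fin.
Qed.

Lemma vo_mono u v : (forall z, Om z -> 0 <= u z) -> (forall z, Om z -> u z <= v z) ->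
  (vo u <= vo v)%E.
Proof.
move=> u0 uv; apply: V_mono => z; case: asboolP => // Oz.
  by rewrite lee_fin u0.
by rewrite lee_fin uv.
Qed.

Lemma vo_scale (c : R) u : 0 <= c -> (forall z, Om z -> 0 <= u z) ->
  vo (fun z => c * u z) = (c%:E * vo u)%E.
Proof.
move=> c0 u0; rewrite /vo /vint_on -V_scale //.
  by congr vint; apply: funext => z; case: asboolP => _; rewrite ?mule0 ?EFinM.
by move=> z; case: asboolP => // /u0; rewrite lee_fin.
Qed.

Lemma vo_add u v : rm u -> rm v -> (forall z, Om z -> 0 <= u z) -> (forall z, Om z -> 0 <= v z) ->
  vo (fun z => u z + v z) = (vo u + vo v)%E.
Proof.
move=> mu mv u0 v0; rewrite !voE -V_add.
- congr vint; apply: funext => z; rewrite /ru; case: asboolP => _ //.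
  by rewrite addr0.
- exact: vo_pm.
- exact: vo_pm.
- by move=> z; rewrite /ru; case: asboolP => // /u0; rewrite lee_fin.
- by move=> z; rewrite /ru; case: asboolP => // /v0; rewrite lee_fin.
Qed.

Lemma vo_ae (N : set V) u v :
  measurable [set p : n.-tuple R * n.-tuple R | N (toC p.1 p.2)] ->
  vint (fun z => ((`[< N z >] : bool)%:R : R)%:E) = 0%E ->
  (forall z, Om z -> 0 <= u z) -> (forall z, Om z -> 0 <= v z) ->
  (forall z, Om z -> ~ N z -> u z <= v z) -> (vo u <= vo v)%E.
Proof.
move=> mN N0 u0 v0 uv; apply: (V_ae (h := fun z => ((`[< N z >] : bool)%:R : R)%:E)) N0 _ _ _.
- apply/measurable_EFinP.
  rewrite (_ : (fun p => _) = \1_[set p : n.-tuple R * n.-tuple R | N (toC p.1 p.2)]).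
    exact: measurable_indic.
  by apply: funext => p; rewrite indicE.
- by move=> z; rewrite lee_fin; case: asboolP.
- by move=> z; case: asboolP => // /u0; rewrite lee_fin.
- by move=> z; case: asboolP => // /v0; rewrite lee_fin.
move=> z; case: asboolP => [Nz H|nNz _].
  by exfalso; case: H => /eqP; rewrite oner_eq0.
case: asboolP => // Oz; first by rewrite lee_fin uv.
Qed.

Lemma vo0 : vo (fun _ => 0) = 0%E.
Proof.
have := @vo_scale 0 (fun _ => 0) (lexx _) (fun _ _ => lexx _).
by rewrite mul0e => <-; congr vo; apply: funext => z; rewrite mul0r.
Qed.

Lemma vo_ext u v : (forall z, Om z -> u z = v z) -> vo u = vo v.
Proof.
move=> uv; rewrite /vo /vint_on; congr vint; apply: funext => z.
by case: asboolP => // /uv ->.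
Qed.

Local Notation rint := (@rint R n Om).
Lemma rintE u : rint u = fine (vo (fun z => Num.max (u z) 0)) - fine (vo (fun z => Num.max (- u z) 0)).
Proof. by []. Qed.

Lemma rint_nonneg u : (forall z, Om z -> 0 <= u z) -> rint u = fine (vo u).
Proof.
move=> u0; rewrite rintE (@vo_ext (fun z => Num.max (- u z) 0) (fun _ => 0)).
  rewrite vo0 /= subr0; congr fine; apply: vo_ext => z Oz.
  by rewrite max_l // u0.
by move=> z Oz; rewrite max_r // oppr_le0 u0.
Qed.

Lemma rint_opp u : rint (fun z => - u z) = - rint u.
Proof.
rewrite !rintE opprB; congr (_ - _); congr (fine (vo _)); apply: funext => z.
by rewrite opprK.
Qed.

Lemma fineMc (c : R) (X : \bar R) : 0 <= c -> fine (c%:E * X)%E = c * fine X.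
Proof.
move=> c0; case: X => [x| |] //=.
- have [->|cp] := eqVneq c 0; first by rewrite mul0e mul0r.
  by rewrite gt0_muley ?lte_fin ?lt_def ?cp //= mulr0.
- have [->|cp] := eqVneq c 0; first by rewrite mul0e mul0r.
  by rewrite gt0_muleNy ?lte_fin ?lt_def ?cp //= mulr0.
Qed.

Lemma rint_scale_ge0 (c : R) u : 0 <= c -> rint (fun z => c * u z) = c * rint u.
Proof.
move=> c0; rewrite !rintE mulrBr -!fineMc // -!vo_scale //; last 2 first.
- by move=> z _; rewrite le_max lexx orbT.
- by move=> z _; rewrite le_max lexx orbT.
congr (fine (vo _) - fine (vo _)); apply: funext => z.
  by rewrite maxr_pMr // mulr0.
by rewrite maxr_pMr // mulr0 mulrN.
Qed.

Lemma rint_scale (c : R) u : rint (fun z => c * u z) = c * rint u.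
Proof.
have [c0|c0] := leP 0 c; first exact: rint_scale_ge0.
have -> : (fun z => c * u z) = (fun z => - ((- c) * u z)).
  by apply: funext => z; rewrite mulNr opprK.
by rewrite rint_opp rint_scale_ge0 ?mulNr ?opprK // oppr_ge0 ltW.
Qed.

Definition rI (u : V -> R) := rm u /\ (vo (fun z => `|u z|%R) < +oo)%E.

Lemma vo_fin (u : V -> R) : (forall z, Om z -> 0 <= u z) -> (vo u < +oo)%E -> exists a, vo u = a%:E /\ 0 <= a.
Proof.
move=> u0 uf; exists (fine (vo u)); rewrite fineK ?fine_ge0 ?vo_ge0 //.
by rewrite ge0_fin_numE // vo_ge0.
Qed.

Lemma vo_lt (u v : V -> R) : (forall z, Om z -> 0 <= u z) -> (forall z, Om z -> u z <= v z) ->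
  (vo v < +oo)%E -> (vo u < +oo)%E.
Proof. by move=> u0 uv; apply: le_lt_trans; apply: vo_mono. Qed.

Lemma rint_add (u v : V -> R) : rI u -> rI v -> rint (fun z => u z + v z) = rint u + rint v.
Proof.
move=> [mu fu] [mv fv].
pose w z := u z + v z.
have mw : rm w by apply: rm_add.
have hp (f : V -> R) z : 0 <= Num.max (f z) 0 by rewrite le_max lexx orbT.
have hm (f : V -> R) z : Num.max (f z) 0 <= `|f z| by rewrite ge_max normr_ge0 ler_norm.
have hn (f : V -> R) z : Num.max (- f z) 0 <= `|f z| by rewrite ge_max normr_ge0 -normrN ler_norm.
have fw : (vo (fun z => `|u z| + `|v z|)%R < +oo)%E.
  rewrite vo_add //; try by apply: rm_abs.
  - by rewrite lte_add_pinfty.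
have wle z : `|w z| <= `|u z| + `|v z| by apply: ler_normD.
have fin1 f g : (forall z, Om z -> Num.max (f z) 0 <= g z) -> (vo g < +oo)%E ->
  exists a, vo (fun z => Num.max (f z) 0) = a%:E.
  move=> fg gf; have [a [Ha _]] := @vo_fin (fun z => Num.max (f z) 0) (fun z _ => hp f z)
     (vo_lt (fun z _ => hp f z) fg gf).
  by exists a.
have [a1 E1] := fin1 w _ (fun z _ => le_trans (hm w z) (wle z)) fw.
have [a2 E2] := fin1 (fun z => - w z) _ (fun z _ => le_trans (hn w z) (wle z)) fw.
have [a3 E3] := fin1 u _ (fun z _ => hm u z) fu.
have [a4 E4] := fin1 (fun z => - u z) _ (fun z _ => hn u z) fu.
have [a5 E5] := fin1 v _ (fun z _ => hm v z) fv.
have [a6 E6] := fin1 (fun z => - v z) _ (fun z _ => hn v z) fv.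
have key : vo (fun z => Num.max (w z) 0 + Num.max (- u z) 0 + Num.max (- v z) 0) =
           vo (fun z => Num.max (- w z) 0 + Num.max (u z) 0 + Num.max (v z) 0).
  apply: vo_ext => z _; rewrite /w.
  have Hx (x : R) : Num.max x 0 - Num.max (- x) 0 = x.
    by have [x0|x0] := leP 0 x; have [y0|y0] := leP 0 (- x); lra.
  have := Hx (u z); have := Hx (v z); have := Hx (u z + v z); lra.
have mx (f : V -> R) : rm f -> rm (fun z => Num.max (f z) 0) by apply: rm_max0.
have add3 (f g h : V -> R) : rm f -> rm g -> rm h ->
   vo (fun z => Num.max (f z) 0 + Num.max (g z) 0 + Num.max (h z) 0) =
   (vo (fun z => Num.max (f z) 0%R) + vo (fun z => Num.max (g z) 0%R) + vo (fun z => Num.max (h z) 0%R))%E.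
  move=> mf mg mh; rewrite vo_add; try (by apply: rm_add; apply: mx); try exact: mx;
    try (by move=> z _; apply: addr_ge0; apply: hp); try (by move=> z _; apply: hp).
  by rewrite vo_add; try exact: mx; try (by move=> z _; apply: hp).
rewrite (add3 w (fun z => - u z) (fun z => - v z)) in key; try exact: rm_opp; try exact: mw.
rewrite (add3 (fun z => - w z) u v) in key; try exact: rm_opp; try exact: mw; try exact: mu; try exact: mv.
move: key; rewrite E1 E2 E3 E4 E5 E6 -!EFinD => -[key].
rewrite !rintE E1 E2 E3 E4 E5 E6 /=.
rewrite /w in E1 E2.
lra.
Qed.

End vo.

Local Open Scope complex_scope.
Section cabs_lemmas.
Variable R : realType.
Lemma normC_cabs (x : R[i]) : `|x| = (cabs x)%:C.
Proof. by rewrite /cabs normc_def. Qed.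
Lemma cabs_ge0 (x : R[i]) : 0 <= cabs x.
Proof. by rewrite cabsE sqrtr_ge0. Qed.
Lemma cabs_C (x : R) : cabs (x%:C) = `|x|.
Proof. by rewrite cabsE /= expr0n /= addr0 sqrtr_sqr. Qed.
Lemma cabsM (x y : R[i]) : cabs (x * y) = cabs x * cabs y.
Proof. by rewrite /cabs normrM !normC_cabs /= mulr0 subr0. Qed.
Lemma cabs_conj (x : R[i]) : cabs (conjc x) = cabs x.
Proof. by case: x => a b; rewrite !cabsE /= sqrrN. Qed.
Lemma Re_le_cabs (x : R[i]) : `|complex.Re x| <= cabs x.
Proof.
rewrite cabsE -sqrtr_sqr ler_sqrt; last by rewrite addr_ge0 // sqr_ge0.
by rewrite lerDl sqr_ge0.
Qed.
Lemma Im_le_cabs (x : R[i]) : `|complex.Im x| <= cabs x.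
Proof.
rewrite cabsE -sqrtr_sqr ler_sqrt; last by rewrite addr_ge0 // sqr_ge0.
by rewrite lerDr sqr_ge0.
Qed.
End cabs_lemmas.

Section cint_bound.
Variable R : realType.
Variable n : nat.
Local Notation V := ('rV[R[i]]_n).
Variable Om : set V.
Local Notation rm := (@rm R n Om).
Local Notation vo := (@vo R n Om).
Local Notation rint := (@rint R n Om).

Lemma rI_scale (c : R) (u : V -> R) : rI Om u -> rI Om (fun z => c * u z).
Proof.
move=> [mu fu]; split; first exact: rm_scale.
have [x [Hx _]] := vo_fin (fun z _ => normr_ge0 (u z)) fu.
rewrite (@vo_ext _ _ _ _ (fun z => `|c| * `|u z|)); last by move=> z _; rewrite normrM.
by rewrite vo_scale // Hx -EFinM ltry.
Qed.

Lemma cint_bound (h : V -> R[i]) : Cmeasurable (restr Om h) ->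
  (vo (fun z => cabs (h z)) < +oo)%E ->
  cabs (cint Om h) <= fine (vo (fun z => cabs (h z))).
Proof.
move=> mh fh.
pose X z := complex.Re (h z); pose Y z := complex.Im (h z).
have c0 z : 0 <= cabs (h z) by apply: cabs_ge0.
have rIX : rI Om X.
  split; first exact: CM_Re.
  by apply: vo_lt fh => z _; [exact: normr_ge0|exact: Re_le_cabs].
have rIY : rI Om Y.
  split; first exact: CM_Im.
  by apply: vo_lt fh => z _; [exact: normr_ge0|exact: Im_le_cabs].
have fin0 : vo (fun z => cabs (h z)) \is a fin_num.
  by rewrite ge0_fin_numE // vo_ge0.
rewrite /cint cabsE /=.
set A := rint X; set B := rint Y.
set r := Num.sqrt (A ^+ 2 + B ^+ 2).
have AB0 : 0 <= A ^+ 2 + B ^+ 2 by rewrite addr_ge0 // sqr_ge0.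
have [r0|rpos] := eqVneq r 0.
  by rewrite r0 fine_ge0 // vo_ge0.
have rgt0 : 0 < r by rewrite lt_def rpos sqrtr_ge0.
have r2 : r ^+ 2 = A ^+ 2 + B ^+ 2 by rewrite sqr_sqrtr.
pose a := A / r; pose b := B / r.
have ab1 : a ^+ 2 + b ^+ 2 = 1.
  rewrite /a /b !expr_div_n -mulrDl -r2 divff //.
  by rewrite expf_eq0 /= rpos.
have Hr : r = rint (fun z => a * X z + b * Y z).
  rewrite rint_add; [|exact: rI_scale|exact: rI_scale].
  rewrite (@rint_scale _ _ Om a X) (@rint_scale _ _ Om b Y).
  rewrite -/A -/B.
  have -> : a * A + b * B = (A ^+ 2 + B ^+ 2) / r.
    by rewrite /a /b; field.
  by rewrite -r2 expr2 mulfK.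
rewrite Hr rintE.
have W0 z : Om z -> 0 <= Num.max (a * X z + b * Y z) 0 by move=> _; rewrite le_max lexx orbT.
have Wle z : Om z -> Num.max (a * X z + b * Y z) 0 <= cabs (h z).
  move=> _; rewrite ge_max c0 andbT cabsE -/(X z) -/(Y z).
  have E : (a * X z + b * Y z) ^+ 2 <= X z ^+ 2 + Y z ^+ 2.
    have E : X z ^+ 2 + Y z ^+ 2 = (a * X z + b * Y z) ^+ 2 + (a * Y z - b * X z) ^+ 2.
      by rewrite -[X z ^+ 2 + Y z ^+ 2]mul1r -ab1; ring.
    by rewrite E lerDl sqr_ge0.
  apply: le_trans (_ : Num.sqrt ((a * X z + b * Y z) ^+ 2) <= _).
    by rewrite sqrtr_sqr ler_norm.
  by rewrite ler_sqrt // addr_ge0 // sqr_ge0.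
have fin1 : vo (fun z => Num.max (a * X z + b * Y z) 0) \is a fin_num.
  rewrite ge0_fin_numE; last exact: vo_ge0.
  by apply: vo_lt fh.
apply: le_trans (_ : fine (vo (fun z => Num.max (a * X z + b * Y z) 0)) <= _).
  by rewrite lerBlDr lerDl fine_ge0 // vo_ge0 // => z _; rewrite le_max lexx orbT.
by apply: fine_le => //; apply: vo_mono.
Qed.

End cint_bound.

Section kfacts.
Variable R : realType.
Variable n : nat.
Local Notation V := ('rV[R[i]]_n).
Variable Om : set V.
Variable K : V -> V -> R[i].
Hypothesis BK : bergman_kernel Om K.
Hypothesis BRp : property_BR Om K.
Hypothesis Om0 : Om !=set0.
Local Notation rm := (@rm R n Om).
Local Notation vo := (@vo R n Om).
Local Notation rint := (@rint R n Om).

Lemma rint0 : rint (fun _ => 0) = 0.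
Proof. by rewrite rint_nonneg ?vo0. Qed.

Lemma cint_real (u : V -> R) : cint Om (fun w => (u w)%:C) = (rint u)%:C.
Proof.
have E : (fun z => complex.Im ((u z)%:C)) = (fun _ => 0 : R) by [].
by rewrite /cint E rint0.
Qed.

Lemma cint_conj (h : V -> R[i]) : cint Om (fun w => conjc (h w)) = conjc (cint Om h).
Proof.
rewrite /cint (_ : (fun z => complex.Re (conjc (h z))) = fun z => complex.Re (h z)); last first.
  by apply: funext => z; case: (h z).
rewrite (_ : (fun z => complex.Im (conjc (h z))) = fun z => - complex.Im (h z)); last first.
  by apply: funext => z; case: (h z).
by rewrite rint_opp.
Qed.

Lemma mulcJ_cabs (x : R[i]) : x * conjc x = (cabs x ^+ 2)%:C.
Proof.
rewrite cabsE sqr_sqrtr; last by rewrite addr_ge0 // sqr_ge0.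
case: x => a b /=; apply/eqP; rewrite eq_complex /=; apply/andP; split; apply/eqP; ring.
Qed.

Lemma K_meas z : Om z -> Cmeasurable (restr Om (fun w => K w z)).
Proof. by move=> Oz; have [_ [mK _]] := BK.1 z Oz. Qed.

Lemma K_L2 z : Om z -> (vo (fun w => cabs (K w z) ^+ 2)%R < +oo)%E.
Proof.
move=> Oz; have [_ [_ fK]] := BK.1 z Oz.
move: fK; rewrite /Lpnorm -/(vo (fun w => cabs (K w z) `^ 2)).
rewrite (_ : vo (fun w => cabs (K w z) `^ 2) = vo (fun w => cabs (K w z) ^+ 2)); last first.
  by apply: vo_ext => w _; rewrite -[2]/(2%:R) powR_mulrn // cabs_ge0.
have [->|] := eqVneq (vo (fun w => cabs (K w z) ^+ 2)) +oo%E.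
  by rewrite poweRyr // invr_eq0.
by move=> H _; rewrite ltey.
Qed.

Definition kz z := fine (vo (fun w => cabs (K w z) ^+ 2)).

Lemma kzE z : Om z -> vo (fun w => cabs (K w z) ^+ 2) = (kz z)%:E.
Proof.
move=> Oz; rewrite /kz fineK // ge0_fin_numE ?K_L2 //.
by apply: vo_ge0 => w _; rewrite sqr_ge0.
Qed.

Lemma Kzz z : Om z -> K z z = (kz z)%:C.
Proof.
move=> Oz; rewrite (BK.2 _ (BK.1 z Oz) z Oz).
rewrite (_ : (fun w => K w z * conjc (K w z)) = fun w => (cabs (K w z) ^+ 2)%:C); last first.
  by apply: funext => w; rewrite mulcJ_cabs.
rewrite cint_real rint_nonneg // => w _; exact: sqr_ge0.
Qed.

Lemma kz_gt0 z : Om z -> 0 < kz z.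
Proof.
move=> Oz; rewrite lt_def fine_ge0 ?andbT; last by apply: vo_ge0 => w _; exact: sqr_ge0.
apply/eqP => k0; have := BRp.1 z Oz; rewrite Kzz // k0.
by rewrite eqxx.
Qed.

Lemma K_herm z w : Om z -> Om w -> K z w = conjc (K w z).
Proof.
move=> Oz Ow.
rewrite (BK.2 _ (BK.1 w Ow) z Oz) (BK.2 _ (BK.1 z Oz) w Ow) -cint_conj.
congr cint; apply: funext => u.
by rewrite rmorphM /= conjcK mulrC.
Qed.

Lemma K_sym_abs z w : Om z -> Om w -> cabs (K z w) = cabs (K w z).
Proof. by move=> Oz Ow; rewrite K_herm // cabs_conj. Qed.

Definition S := fine (BR_sup Om K).

Lemma BR_elem z w : Om z -> Om w ->
  (complex.Re (`|K w z| / K z z))%:E = (cabs (K w z) / kz z)%:E.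
Proof.
move=> Oz Ow; rewrite Kzz // normC_cabs -fmorph_div.
by [].
Qed.

Lemma BR_supE : BR_sup Om K = S%:E.
Proof.
rewrite /S fineK // fin_numE; apply/andP; split.
  case: Om0 => z Oz; apply/eqP => H.
  have : ((complex.Re (`|K z z| / K z z))%:E <= BR_sup Om K)%E.
    by apply: ereal_sup_ubound; exists z, z.
  by rewrite H leeNy_eq.
by rewrite lt_eqF // BRp.2.
Qed.

Lemma BR_le z w : Om z -> Om w -> cabs (K w z) / kz z <= S.
Proof.
move=> Oz Ow; rewrite -lee_fin -BR_supE -BR_elem //.
by apply: ereal_sup_ubound; exists z, w.
Qed.

Lemma S_ge1 : 1 <= S.
Proof.
case: Om0 => z Oz; apply: le_trans (BR_le Oz Oz).
by rewrite Kzz // cabs_C ger0_norm ?divff ?gt_eqF ?kz_gt0 // ltW // kz_gt0.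
Qed.

Definition kk z w := cabs (K w z) ^+ 2 / kz z.

Lemma kk_ge0 z w : Om z -> 0 <= kk z w.
Proof. by move=> Oz; rewrite /kk divr_ge0 ?sqr_ge0 // ltW // kz_gt0. Qed.

Lemma vo_kk z : Om z -> vo (kk z) = 1%E.
Proof.
move=> Oz; rewrite (@vo_ext _ _ _ _ (fun w => (kz z)^-1 * cabs (K w z) ^+ 2)); last first.
  by move=> w _; rewrite /kk mulrC.
rewrite vo_scale; last 2 first.
- by rewrite invr_ge0 ltW // kz_gt0.
- by move=> w _; exact: sqr_ge0.
by rewrite kzE // -EFinM mulVf // gt_eqF // kz_gt0.
Qed.

Lemma kk_le z w : Om z -> Om w -> kk z w <= S * cabs (K z w).
Proof.
move=> Oz Ow; rewrite /kk (K_sym_abs Oz Ow) expr2 -mulrA mulrC.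
by apply: ler_wpM2r; [exact: cabs_ge0|exact: BR_le].
Qed.

Lemma rm_kk z : Om z -> rm (kk z).
Proof.
move=> Oz; apply: (@rm_ext _ _ _ (fun w => (kz z)^-1 * (cabs (K w z) * cabs (K w z)))).
  by move=> w _; rewrite /kk mulrC expr2.
by apply: rm_scale; apply: rm_mul; apply: rm_cabs; apply: K_meas.
Qed.

Lemma berezinE phi z : Om z ->
  berezin Om K phi z = cint Om (fun w => phi w * (kk z w)%:C).
Proof.
move=> Oz; rewrite /berezin; congr cint; apply: funext => w.
by rewrite Kzz // normC_cabs /kk -rmorphXn -fmorph_div.
Qed.

End kfacts.

Section tangent.
Variable R : realType.
Lemma tangent (q x t : R) : 1 <= q -> 0 <= x -> 0 <= t ->
  q * x `^ (q - 1) * t <= t `^ q + (q - 1) * x `^ q.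
Proof.
move=> q1 x0 t0; have [->|qne1] := eqVneq q 1.
  by rewrite subrr powRr0 powRr1 // mul0r addr0 !mul1r.
have q1' : 1 < q by rewrite lt_def qne1 q1.
have qpos : 0 < q by apply: lt_trans q1'.
have qm1 : 0 < q - 1 by rewrite subr_gt0.
pose q' := q / (q - 1).
have q'pos : 0 < q' by rewrite divr_gt0.
have conj : q^-1 + q'^-1 = 1.
  rewrite /q' invf_div; field; rewrite ?gt_eqF //.
have := @conjugate_powR R t (x `^ (q - 1)) q q' t0 (powR_ge0 _ _) qpos q'pos conj.
rewrite -powRrM (_ : (q - 1) * q' = q); last by rewrite /q'; field; rewrite gt_eqF.
move=> H.
have := H; rewrite -(@ler_pM2l _ q) // => H2.
apply: le_trans (_ : q * (t `^ q / q + x `^ q / q') <= _).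
  by rewrite (mulrC t) mulrA in H2.
rewrite /q' mulrDr le_eqVlt; apply/orP; left; apply/eqP; field; rewrite ?gt_eqF //.
Qed.
End tangent.

Section jensen.
Variable R : realType.
Variable n : nat.
Local Notation V := ('rV[R[i]]_n).
Variable Om : set V.
Variable K : V -> V -> R[i].
Hypothesis BK : bergman_kernel Om K.
Hypothesis BRp : property_BR Om K.
Hypothesis Om0 : Om !=set0.
Local Notation rm := (rm Om).
Local Notation vo := (vo Om).
Local Notation kk := (kk Om K).
Local Notation S := (S Om K).

Lemma jensen z (g : V -> R) (q : R) : Om z -> 1 <= q -> rm g -> (forall w, Om w -> 0 <= g w) ->
  (vo (fun w => (g w * kk z w)%R) < +oo)%E -> (vo (fun w => (g w `^ q * kk z w)%R) < +oo)%E ->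
  fine (vo (fun w => g w * kk z w)) `^ q <= fine (vo (fun w => g w `^ q * kk z w)).
Proof.
move=> Oz q1 mg g0 fJ fQ.
have kk0 w : Om w -> 0 <= kk z w by move=> _; exact: (kk_ge0 BK BRp w Oz).
have qpos : 0 < q by apply: lt_le_trans q1.
have [J [EJ J0]] := vo_fin (fun w Ow => mulr_ge0 (g0 w Ow) (kk0 w Ow)) fJ.
have [Q [EQ Q0]] := vo_fin (fun w Ow => mulr_ge0 (powR_ge0 (g w) q) (kk0 w Ow)) fQ.
rewrite EJ EQ /=.
have [->|Jne0] := eqVneq J 0; first by rewrite powR0 // gt_eqF.
have key : (vo (fun w => ((q * J `^ (q - 1)) * (g w * kk z w))%R) <=
    vo (fun w => (g w `^ q * kk z w + ((q - 1) * J `^ q) * kk z w)%R))%E.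
  apply: vo_mono => w Ow.
    by apply: mulr_ge0; [apply: mulr_ge0; [exact: ltW|exact: powR_ge0]|apply: mulr_ge0; [exact: g0|exact: kk0]].
  rewrite mulrA -mulrDl; apply: ler_wpM2r; first exact: kk0.
  by apply: tangent => //; exact: g0.
rewrite vo_scale in key; last 2 first.
- by rewrite mulr_ge0 ?powR_ge0 // ltW.
- by move=> w Ow; rewrite mulr_ge0 ?g0 ?kk0.
rewrite vo_add in key; last 4 first.
- by apply: rm_mul; [exact: rm_powR (lt0r_neq0 qpos) mg|have := rm_kk BK Oz; apply].
- by apply: rm_scale; have := rm_kk BK Oz; apply.
- by move=> w Ow; apply: mulr_ge0; [exact: powR_ge0|exact: kk0].
- by move=> w Ow; apply: mulr_ge0; [apply: mulr_ge0; [rewrite subr_ge0|exact: powR_ge0]|exact: kk0].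
rewrite vo_scale in key; last 2 first.
- by apply: mulr_ge0; [rewrite subr_ge0|exact: powR_ge0].
- by move=> w Ow; rewrite kk0.
rewrite EJ EQ (vo_kk BK BRp Oz) mule1 -!EFinM -EFinD lee_fin in key.
have E : J `^ (q - 1) * J = J `^ q.
  by rewrite -{2}(powRr1 J0) -powRD ?subrK // Jne0 implybT.
rewrite -mulrA E in key.
nra.
Qed.
End jensen.

Section misc.
Variable R : realType.
Lemma powle (s x y : R) : 0 <= s -> 0 <= x -> x <= y -> x `^ s <= y `^ s.
Proof.
move=> s0 x0 xy; apply: ge0_ler_powR => //; rewrite nnegrE //.
exact: le_trans xy.
Qed.
Lemma ReMC (x : R[i]) (r : R) : complex.Re (x * r%:C) = complex.Re x * r.
Proof. by case: x => a b /=; rewrite mulr0 subr0. Qed.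
Lemma ImMC (x : R[i]) (r : R) : complex.Im (x * r%:C) = complex.Im x * r.
Proof. by case: x => a b /=; rewrite mulr0 add0r. Qed.
Lemma cabs_abs (x : R[i]) : cabs (`|x|) = cabs x.
Proof. by rewrite normC_cabs cabs_C ger0_norm // cabs_ge0. Qed.
Lemma mulC (x y : R) : x%:C * y%:C = (x * y)%:C.
Proof. by rewrite rmorphM. Qed.
Lemma le_1_powR (c q : R) : 0 <= c -> 1 <= q -> c <= 1 + c `^ q.
Proof.
move=> c0 q1; have [c1|c1] := leP c 1.
  by apply: le_trans c1 _; rewrite lerDl powR_ge0.
apply: le_trans (_ : c `^ q <= _); last by rewrite lerDr.
by apply: le1r_powR => //; rewrite ltW.
Qed.
End misc.

Section realcase.
Variable R : realType.
Variable n : nat.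
Local Notation V := ('rV[R[i]]_n).
Variable Om : set V.
Variable K : V -> V -> R[i].
Hypothesis BK : bergman_kernel Om K.
Hypothesis BRp : property_BR Om K.
Hypothesis Om0 : Om !=set0.
Variable p0 : R.
Hypothesis hp0 : 1 < p0.
Local Notation rm := (rm Om).
Local Notation vo := (vo Om).
Local Notation kk := (kk Om K).
Local Notation S := (S Om K).

Lemma LpnormE (f : V -> R[i]) (r : R) :
  Lpnorm Om r%:E f = (vo (fun z => (cabs (f z) `^ r)%R) `^ r^-1)%E.
Proof. by []. Qed.

Lemma Lp_fin (f : V -> R[i]) (r : R) : 0 < r -> (Lpnorm Om r%:E f < +oo)%E ->
  (vo (fun z => (cabs (f z) `^ r)%R) < +oo)%E.
Proof.
move=> r0; rewrite LpnormE.
have [->|] := eqVneq (vo (fun z => cabs (f z) `^ r)) +oo%E.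
  by rewrite poweRyr // invr_eq0 gt_eqF.
by move=> H _; rewrite ltey.
Qed.

Lemma berezin_real (r M : R) : p0 <= r -> Pplus_bound Om K p0 M ->
  berezin_bound Om K r%:E ((S * M) `^ (p0 / r)).
Proof.
move=> p0r [M0 PB]; split; first exact: powR_ge0.
move=> phi _ [mphi fphi].
have p0pos : 0 < p0 by apply: lt_trans hp0.
have rpos : 0 < r by apply: lt_le_trans p0r.
pose q := r / p0.
have q1 : 1 <= q by rewrite /q ler_pdivlMr // mul1r.
have qpos : 0 < q by apply: lt_le_trans q1.
have rq : q * p0 = r by rewrite /q divfK // gt_eqF.
have S0 : 0 <= S by apply: le_trans (S_ge1 BK BRp Om0).
have kk0 z w : Om z -> 0 <= kk z w by move=> Oz; exact: (kk_ge0 BK BRp w Oz).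
have [X [EX X0]] := vo_fin (fun z _ => powR_ge0 (cabs (phi z)) r) (Lp_fin rpos fphi).
pose f := fun w => (cabs (phi w) `^ q)%:C.
have cf w : cabs (f w) = cabs (phi w) `^ q by rewrite cabs_C ger0_norm // powR_ge0.
have mf : Cmeasurable (restr Om f).
  apply: rm_CM; last exact: rm0.
  exact: rm_powR (lt0r_neq0 qpos) (rm_cabs mphi).
have Ef : vo (fun w => cabs (f w) `^ p0) = X%:E.
  by rewrite -EX; apply: vo_ext => w _; rewrite cf -powRrM rq.
have Lf : Lpnorm Om p0%:E f = (X `^ p0^-1)%:E by rewrite LpnormE Ef poweR_EFin.
have Lpf : (Lpnorm Om p0%:E f < +oo)%E by rewrite Lf ltry.
have [HN Hb] := PB f (conj mf Lpf).
case: HN => N [mN [N0 HN]].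
set Pf := Pplus Om K f.
rewrite Lf LpnormE in Hb.
have fY : (vo (fun z => (cabs (Pf z) `^ p0)%R) < +oo)%E.
  rewrite ltey; apply/eqP => Hy; move: Hb; rewrite Hy poweRyr ?invr_eq0 ?gt_eqF //.
have [Y [EY Y0]] := vo_fin (fun z _ => powR_ge0 (cabs (Pf z)) p0) fY.
rewrite EY poweR_EFin -EFinM lee_fin in Hb.
have YM : Y <= M `^ p0 * X.
  have := powle (ltW p0pos) (powR_ge0 _ _) Hb.
  rewrite -powRrM mulVf ?gt_eqF // powRr1 // powRM ?powR_ge0 //.
  by rewrite -powRrM mulVf ?gt_eqF // powRr1.
have core z : Om z -> ~ N z -> cabs (berezin Om K phi z) `^ r <= S `^ p0 * cabs (Pf z) `^ p0.
  move=> Oz nNz.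
  have [mPz fPz] := HN z Oz nNz.
  pose Pw w := cabs (K z w) * cabs (phi w) `^ q.
  have Pw0 w : 0 <= Pw w by rewrite mulr_ge0 ?cabs_ge0 ?powR_ge0.
  have E1 : vo Pw = vo (fun w => cabs (`|K z w| * f w)).
    by apply: vo_ext => w _; rewrite cabsM cabs_abs cf.
  have fPw : (vo Pw < +oo)%E by rewrite E1; exact: fPz.
  have [P [EPw P0]] := vo_fin (fun w _ => Pw0 w) fPw.
  have PfzE : Pf z = P%:C.
    rewrite /Pf /Pplus (_ : (fun w => `|K z w| * f w) = fun w => (Pw w)%:C).
      by rewrite cint_real rint_nonneg // EPw.
    by apply: funext => w; rewrite normC_cabs mulC.
  have cPf : cabs (Pf z) = P by rewrite PfzE cabs_C ger0_norm.
  have fQ : (vo (fun w => (cabs (phi w) `^ q * kk z w)%R) <= (S * P)%:E)%E.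
    rewrite EFinM -EPw -vo_scale //; apply: vo_mono => w Ow.
      by rewrite mulr_ge0 ?powR_ge0 ?kk0.
    have H := kk_le BK BRp Om0 Oz Ow; have a0 := powR_ge0 (cabs (phi w)) q.
    rewrite /Pw; nra.
  have fJ : (vo (fun w => (cabs (phi w) * kk z w)%R) <= 1 + vo (fun w => (cabs (phi w) `^ q * kk z w)%R))%E.
    rewrite -(vo_kk BK BRp Oz) -vo_add; last 4 first.
    - by have := rm_kk BK Oz; apply.
    - by apply: rm_mul; [exact: rm_powR (lt0r_neq0 qpos) (rm_cabs mphi)|have := rm_kk BK Oz; apply].
    - by move=> w Ow; exact: kk0.
    - by move=> w Ow; rewrite mulr_ge0 ?powR_ge0 ?kk0.
    apply: vo_mono => w Ow; first by rewrite mulr_ge0 ?cabs_ge0 ?kk0.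
    rewrite -{2}(mul1r (kk z w)) -mulrDl; apply: ler_wpM2r; first exact: kk0.
    by apply: le_1_powR => //; exact: cabs_ge0.
  have fQ' : (vo (fun w => (cabs (phi w) `^ q * kk z w)%R) < +oo)%E by apply: le_lt_trans fQ _; rewrite ltry.
  have fJ' : (vo (fun w => (cabs (phi w) * kk z w)%R) < +oo)%E.
    by apply: le_lt_trans fJ _; rewrite lte_add_pinfty ?ltry.
  pose h w := phi w * (kk z w)%:C.
  have ch : vo (fun w => cabs (h w)) = vo (fun w => cabs (phi w) * kk z w).
    by apply: vo_ext => w Ow; rewrite /h cabsM cabs_C ger0_norm ?kk0.
  have mh : Cmeasurable (restr Om h).
    apply: rm_CM.
      apply: (@rm_ext _ _ _ (fun w => complex.Re (phi w) * kk z w)); first by move=> w _; rewrite /h ReMC.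
      by apply: rm_mul; [exact: CM_Re|have := rm_kk BK Oz; apply].
    apply: (@rm_ext _ _ _ (fun w => complex.Im (phi w) * kk z w)); first by move=> w _; rewrite /h ImMC.
    by apply: rm_mul; [exact: CM_Im|have := rm_kk BK Oz; apply].
  have B1 : cabs (berezin Om K phi z) <= fine (vo (fun w => cabs (phi w) * kk z w)).
    by rewrite (berezinE BK phi Oz) -ch; apply: cint_bound => //; rewrite ch.
  have JQ := jensen BK BRp Oz q1 (rm_cabs mphi) (fun w _ => cabs_ge0 (phi w)) fJ' fQ'.
  have QSP : fine (vo (fun w => cabs (phi w) `^ q * kk z w)) <= S * P.
    move: fQ; have [Q [EQ Q0]] := vo_fin (fun w Ow => mulr_ge0 (powR_ge0 (cabs (phi w)) q) (kk0 z w Oz)) fQ'.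
    by rewrite EQ lee_fin.
  rewrite cPf -rq powRrM -powRM //.
  apply: powle; first exact: ltW.
    exact: powR_ge0.
  apply: le_trans QSP; apply: le_trans JQ.
  by apply: powle => //; [exact: ltW|exact: cabs_ge0].
have L : (vo (fun z => (cabs (berezin Om K phi z) `^ r)%R) <= (S `^ p0 * Y)%:E)%E.
  rewrite EFinM -EY -vo_scale; last 2 first.
  - exact: powR_ge0.
  - by move=> z _; exact: powR_ge0.
  apply: (vo_ae mN N0) => //.
  - by move=> z _; exact: powR_ge0.
  - by move=> z _; rewrite mulr_ge0 ?powR_ge0.
have [Z [EZ Z0]] := vo_fin (fun z _ => powR_ge0 (cabs (berezin Om K phi z)) r) (le_lt_trans L (ltry _)).
rewrite !LpnormE EZ EX !poweR_EFin -EFinM lee_fin.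
have ZB : Z <= (S * M) `^ p0 * X.
  have L' : Z <= S `^ p0 * Y by rewrite -lee_fin -EZ.
  apply: le_trans L' _.
  rewrite powRM // -mulrA; apply: ler_wpM2l; first exact: powR_ge0.
  exact: YM.
have ri0 : 0 <= r^-1 by rewrite invr_ge0 ltW.
apply: le_trans (powle ri0 Z0 ZB) _.
rewrite powRM ?powR_ge0 // -powRrM.
by [].
Qed.
End realcase.

Section infcase.
Variable R : realType.
Variable n : nat.
Local Notation V := ('rV[R[i]]_n).
Variable Om : set V.
Variable K : V -> V -> R[i].
Hypothesis BK : bergman_kernel Om K.
Hypothesis BRp : property_BR Om K.
Hypothesis Om0 : Om !=set0.
Local Notation rm := (rm Om).
Local Notation vo := (vo Om).
Local Notation kk := (kk Om K).
Local Notation S := (S Om K).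

Lemma berezin_cabs_le (phi : V -> R[i]) z : Om z -> Cmeasurable (restr Om phi) ->
  (vo (fun w => (cabs (phi w) * kk z w)%R) < +oo)%E ->
  cabs (berezin Om K phi z) <= fine (vo (fun w => cabs (phi w) * kk z w)).
Proof.
move=> Oz mphi fJ.
have kk0 w : Om w -> 0 <= kk z w by move=> _; exact: (kk_ge0 BK BRp w Oz).
pose h w := phi w * (kk z w)%:C.
have ch : vo (fun w => cabs (h w)) = vo (fun w => cabs (phi w) * kk z w).
  by apply: vo_ext => w Ow; rewrite /h cabsM cabs_C ger0_norm ?kk0.
have mh : Cmeasurable (restr Om h).
  apply: rm_CM.
    apply: (@rm_ext _ _ _ (fun w => complex.Re (phi w) * kk z w)); first by move=> w _; rewrite /h ReMC.
    by apply: rm_mul; [exact: CM_Re|have := rm_kk BK Oz; apply].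
  apply: (@rm_ext _ _ _ (fun w => complex.Im (phi w) * kk z w)); first by move=> w _; rewrite /h ImMC.
  by apply: rm_mul; [exact: CM_Im|have := rm_kk BK Oz; apply].
by rewrite (berezinE BK phi Oz) -ch; apply: cint_bound => //; rewrite ch.
Qed.

Lemma eq_ninfty (x : \bar R) : (forall M : R, (x <= M%:E)%E) -> x = -oo%E.
Proof.
case: x => [r| |] // H.
  by have := H (r - 1)%R; rewrite lee_fin => H1; exfalso; lra.
by have := H 0; rewrite leye_eq.
Qed.

Lemma cabs0 : cabs (0 : R[i]) = 0.
Proof. by rewrite -[0 : R[i]]/((0 : R)%:C) cabs_C normr0. Qed.

Lemma berezin_inf : berezin_bound Om K +oo%E 1.
Proof.
split; first exact: ler01.
move=> phi [mphi finf] _; rewrite mul1e /Lpnorm.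
have [vol0|vol] := eqVneq (vo (fun _ => 1)) 0%E.
  rewrite (@eq_ninfty (ereal_inf _)) ?leNye // => M.
  apply: ereal_inf_lbound; exists M => //.
  apply/eqP; rewrite eq_le; apply/andP; split.
    rewrite -vol0; apply: (@vo_mono _ _ _ (fun z => ((M < cabs (berezin Om K phi z))%R : bool)%:R)).
      by move=> z _; case: (_ < _).
    by move=> z _; case: (_ < _).
  by apply: (@vo_ge0 _ _ _ (fun z => ((M < cabs (berezin Om K phi z))%R : bool)%:R)) => z _; case: (_ < _).
apply: ereal_inf_le_tmp => _ [M HM <-]; exists M => //=.
have M0 : 0 <= M.
  rewrite leNgt; apply/negP => M0; move/eqP: vol; apply; rewrite -HM.
  apply: (@vo_ext _ _ _ (fun _ => 1) (fun z => ((M < cabs (phi z))%R : bool)%:R)) => z _.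
  by rewrite (lt_le_trans M0 (cabs_ge0 _)).
have B z : Om z -> cabs (berezin Om K phi z) <= M.
  move=> Oz.
  have kk0 w : Om w -> 0 <= kk z w by move=> _; exact: (kk_ge0 BK BRp w Oz).
  pose N := [set w | M < cabs (restr Om phi w)].
  have mN : measurable [set p : n.-tuple R * n.-tuple R | N (toC p.1 p.2)].
    have mF := rm_cabs mphi.
    have Fe y : ru Om (fun z => cabs (phi z)) y = cabs (restr Om phi y).
      by rewrite /ru /restr; case: asboolP => // _; rewrite cabs0.
    have := mF measurableT _ (measurable_itv `]M, +oo[); rewrite setTI.
    congr measurable; apply/seteqP; split => p /=.
      by rewrite in_itv /= andbT Fe.
    by rewrite in_itv /= andbT Fe.
  have N0 : vint (fun z => ((`[< N z >] : bool)%:R : R)%:E) = 0%E.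
    rewrite -HM /vint_on; congr vint; apply: funext => w.
    rewrite /N /restr /=; have [Ow|nOw] := pselect (Om w).
      by rewrite (asboolT Ow) asboolb.
    by rewrite (asboolF nOw) cabs0 asboolb ltNge M0.
  have L : (vo (fun w => (cabs (phi w) * kk z w)%R) <= (M%:E * vo (kk z)))%E.
    rewrite -vo_scale //; apply: (vo_ae mN N0).
    - by move=> w Ow; rewrite mulr_ge0 ?cabs_ge0 ?kk0.
    - by move=> w Ow; rewrite mulr_ge0 ?kk0.
    move=> w Ow nNw; apply: ler_wpM2r; first exact: kk0.
    rewrite leNgt; apply/negP => H; apply: nNw.
    by rewrite /N /restr /= asboolT.
  rewrite (vo_kk BK BRp Oz) mule1 in L.
  have [a [Ea a0]] := vo_fin (fun w Ow => mulr_ge0 (cabs_ge0 (phi w)) (kk0 w Ow)) (le_lt_trans L (ltry _)).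
  apply: le_trans (berezin_cabs_le Oz mphi _) _; first by rewrite Ea ltry.
  by rewrite Ea /= -lee_fin -Ea.
have -> : vint_on Om (fun z => (((M < cabs (berezin Om K phi z))%R : bool)%:R : R)%:E) =
  vo (fun z => ((M < cabs (berezin Om K phi z))%R : bool)%:R) by [].
rewrite -(@vo0 _ _ Om); apply: vo_ext => z Oz.
by rewrite ltNge B.
Qed.
End infcase.

Theorem proposition1 (R : realType) (n : nat) (Om : set 'rV[R[i]]_n)
  (K : 'rV[R[i]]_n -> 'rV[R[i]]_n -> R[i]) (p0 : R) :
  (0 < n)%N -> domain Om -> bergman_kernel Om K -> property_BR Om K ->
  1 < p0 -> (exists M : R, Pplus_bound Om K p0 M) ->
  (forall p : \bar R, (p0%:E <= p)%E -> exists C : R, berezin_bound Om K p C) /\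
  (berezin_norm Om K p0%:E <= BR_sup Om K * Pplus_norm Om K p0)%E.
Proof.
move=> _ dom BK BRp hp0 [M0 PB0].
have Om0 : Om !=set0 := dom.2.2.
have S1 := S_ge1 BK BRp Om0.
have Spos : 0 < S Om K by apply: lt_le_trans S1.
split.
  case=> [r| |] hp.
  - by exists ((S Om K * M0) `^ (p0 / r)); apply: berezin_real => //; rewrite -lee_fin.
  - by exists 1; apply: berezin_inf.
  - by rewrite leeNy_eq in hp.
rewrite (BR_supE BRp Om0).
set S := S Om K.
have bb M : Pplus_bound Om K p0 M -> berezin_bound Om K p0%:E (S * M).
  move=> PB; have H := berezin_real BK BRp Om0 hp0 (lexx p0) PB.
  rewrite divff ?gt_eqF ?(lt_trans ltr01 hp0) // powRr1 in H; first exact: H.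
  by apply: mulr_ge0; [exact: ltW|exact: PB.1].
have bnle M : Pplus_bound Om K p0 M -> (berezin_norm Om K p0%:E <= (S * M)%:E)%E.
  by move=> PB; apply: ereal_inf_lbound; exists (S * M) => //; exact: bb.
have i0 : (0 <= Pplus_norm Om K p0)%E.
  by apply: le_ereal_inf_tmp => _ [M PB <-]; rewrite lee_fin PB.1.
have iM : (Pplus_norm Om K p0 <= M0%:E)%E.
  by apply: ereal_inf_lbound; exists M0.
have [i [Ei i0']] : exists i, Pplus_norm Om K p0 = i%:E /\ 0 <= i.
  exists (fine (Pplus_norm Om K p0)); rewrite fineK ?fine_ge0 //.
  by rewrite ge0_fin_numE // (le_lt_trans iM (ltry _)).
rewrite Ei.
have := bnle M0 PB0.
case E: (berezin_norm Om K p0%:E) => [b| |] //=.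
move=> _; rewrite -EFinM lee_fin.
have : ((b / S)%:E <= Pplus_norm Om K p0)%E.
  apply: le_ereal_inf_tmp => _ [M PB <-].
  by rewrite lee_fin ler_pdivrMr // mulrC -lee_fin -E; apply: bnle.
  by rewrite Ei lee_fin ler_pdivrMr // mulrC.
by move=> _; rewrite leNye.
Qed.
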